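(* There is a constant $C>0$ such that for all integers $n\ge 2$, $D\ge 1$ and $k$ with $0<k\le D$, there exist a deterministic distributed algorithm and, for every graph $G$ of size $n$ and diameter $D$, an advice assignment of size at most $C\,(1+(\log n)/k)$, under which the algorithm accomplishes labeled topology recognition in $G$ within time $D+k$.
   Context: Graphs are finite, simple, undirected, connected, with no node labels; at each node of degree $d$ the incident edges carry distinct port numbers $0,\dots,d-1$ (no coherence between endpoints). Isomorphism of such graphs is a bijection of nodes preserving edges and port numbers at both endpoints. Size = number of nodes; $\log$ is base 2. Communication model (LOCAL): synchronous rounds, all nodes start simultaneously; in each round every node may send arbitrary messages to all neighbours, receives their messages (knowing the arrival port), and performs arbitrary local computation. Initially a node knows only its degree and its advice. Advice: an oracle knowing the graph assigns each node a binary string; the size of advice is the maximum string length. All nodes run the same deterministic algorithm. Labeled topology recognition: all nodes output the same port-labeled graph $H$ with distinct node labels, and each node outputs its own label, such that there is an isomorphism from $G$ to $H$ mapping every node to the node of $H$ carrying the label it output. Time is the number of rounds until all nodes have output. *)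

(* Defs.v *)
From Stdlib Require Import Reals.
From mathcomp Require Import all_boot.

Set Implicit Arguments.
Unset Strict Implicit.
Unset Printing Implicit Defensive.

(* deg v = degree of v; for a port p < deg v, nbr v p is the neighbour
   reached through port p, and rport v p is the port number of that
   same edge at the other endpoint. Values for p >= deg v are irrelevant. *)
Record pgraph (n : nat) := PGraph {
  deg : 'I_n -> nat;
  nbr : 'I_n -> nat -> 'I_n;
  rport : 'I_n -> nat -> nat }.

Definition wf_pgraph n (G : pgraph n) : Prop :=
  forall (v : 'I_n) (p : nat), p < deg G v ->
    [/\ nbr G v p != v,
        rport G v p < deg G (nbr G v p),
        nbr G (nbr G v p) (rport G v p) = v,
        rport G (nbr G v p) (rport G v p) = p &
        forall q, q < deg G v -> nbr G v q = nbr G v p -> q = p].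

Fixpoint reach n (G : pgraph n) (t : nat) (u v : 'I_n) : Prop :=
  match t with
  | 0 => u = v
  | t'.+1 => reach G t' u v \/ exists2 p, p < deg G u & reach G t' (nbr G u p) v
  end.

Definition has_diameter n (G : pgraph n) (D : nat) : Prop :=
  (forall u v : 'I_n, reach G D u v) /\
  exists u v : 'I_n, ~ reach G D.-1 u v.

(* A graph H with node labels 0..size H - 1 is given by adjacency lists:
   the entry at position p of list l is (label of neighbour via port p,
   port number of that edge at the neighbour). *)
Definition out_graph := seq (seq (nat * nat)).

Definition labeled_iso n (G : pgraph n) (H : out_graph) (lab : 'I_n -> nat) : Prop :=
  [/\ size H = n,
      injective lab,
      (forall v, lab v < n) &
      forall v, size (nth [::] H (lab v)) = deg G v /\
        forall p, p < deg G v ->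
          nth (0, 0) (nth [::] H (lab v)) p = (lab (nbr G v p), rport G v p)].

(* S = local state type, M = message type (both arbitrary).
   a_init d a : initial state from the degree d and the advice a.
   a_send s p : message sent through port p in state s.
   a_update s ms : new state after receiving ms, where the p-th entry of ms
     is the message that arrived through port p.
   a_output s : the output (H, own label), if the node outputs in state s. *)
Record algorithm (S M : Type) := Algo {
  a_init : nat -> seq bool -> S;
  a_send : S -> nat -> M;
  a_update : S -> seq M -> S;
  a_output : S -> option (out_graph * nat) }.

Fixpoint run S M (A : algorithm S M) n (G : pgraph n) (adv : 'I_n -> seq bool)
    (t : nat) (v : 'I_n) : S :=
  match t with
  | 0 => a_init A (deg G v) (adv v)
  | t'.+1 =>
      a_update A (run A G adv t' v)
        [seq a_send A (run A G adv t' (nbr G v p)) (rport G v p)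
        | p <- iota 0 (deg G v)]
  end.

Definition advice_size n (adv : 'I_n -> seq bool) : nat :=
  \max_(v : 'I_n) size (adv v).

Definition solves_LTR_within S M (A : algorithm S M) n (G : pgraph n)
    (adv : 'I_n -> seq bool) (T : nat) : Prop :=
  exists (H : out_graph) (lab : 'I_n -> nat),
    (forall v : 'I_n, exists2 t, t <= T &
        a_output A (run A G adv t v) = Some (H, lab v) /\
        forall t', t' < t -> a_output A (run A G adv t' v) = None) /\
    labeled_iso G H lab.

Definition log2 (x : R) : R := Rdiv (ln x) (ln (INR 2)).

(* Main.v *)
Require Import Defs.
From Stdlib Require Import Reals Lra ClassicalEpsilon.
From mathcomp Require Import all_boot zify.

Set Implicit Arguments.
Unset Strict Implicit.
Unset Printing Implicit Defensive.

Definition adj n (G : pgraph n) (x y : 'I_n) := exists2 p, p < deg G x & nbr G x p = y.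
Definition exact n (G : pgraph n) (c x : 'I_n) j :=
  reach G j c x /\ forall i, i < j -> ~ reach G i c x.

Lemma reach_mono n (G : pgraph n) s t x y : s <= t -> reach G s x y -> reach G t x y.
Proof.
elim: t => [|t IH]; first by rewrite leqn0 => /eqP->.
rewrite leq_eqVlt ltnS => /orP[/eqP -> //|st] H; left; exact: IH st H.
Qed.

Lemma reach_trans n (G : pgraph n) a b x y z :
  reach G a x y -> reach G b y z -> reach G (a + b) x z.
Proof.
elim: a x => [|a IH] x /=; first by move=> -> .
case=> [H|[p lt H]] H2.
- left; exact: IH H H2.
- right; exists p => //; exact: IH H H2.
Qed.

Lemma reach_adj n (G : pgraph n) x y : adj G x y -> reach G 1 x y.
Proof. by case=> p lt E; right; exists p. Qed.

Lemma reach_step n (G : pgraph n) t x y z : reach G t x y -> adj G y z -> reach G t.+1 x z.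
Proof. move=> H /reach_adj H1; rewrite -addn1; exact: reach_trans H H1. Qed.

Lemma adj_sym n (G : pgraph n) x y : wf_pgraph G -> adj G x y -> adj G y x.
Proof.
move=> wf [p lt <-]; have [_ H1 H2 _ _] := wf x p lt.
by exists (rport G x p).
Qed.

Lemma reach_sym n (G : pgraph n) t x y : wf_pgraph G -> reach G t x y -> reach G t y x.
Proof.
move=> wf; elim: t x => [|t IH] x /=; first by move=> ->.
case=> [H|[p lt H]]; first by left; exact: IH.
have H1 := IH _ H.
apply: reach_step H1 _; apply: adj_sym => //; by exists p.
Qed.

Fixpoint reachb n (G : pgraph n) t (u v : 'I_n) : bool :=
  if t is t'.+1 then reachb G t' u v || has (fun p => reachb G t' (nbr G u p) v) (iota 0 (deg G u))
  else u == v.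

Lemma reachE n (G : pgraph n) t u v : reach G t u v <-> reachb G t u v.
Proof.
elim: t u => [|t IH] u /=; first by split => [->|/eqP].
split.
- case=> [H|[p lt H]]; apply/orP; [left; exact/IH |right; apply/hasP; exists p].
  + by rewrite mem_iota add0n.
  + exact/IH.
- case/orP=> [/IH H|/hasP[p]]; first by left.
  rewrite mem_iota add0n => /andP[_ lt] /IH H; right; by exists p.
Qed.

Definition vtree := GenTree.tree nat.

Fixpoint view n (G : pgraph n) (a : 'I_n -> seq bool) t (v : 'I_n) : vtree :=
  if t is t'.+1 then
    GenTree.Node 1 (view G a t' v :: [seq GenTree.Node 2 [:: view G a t' (nbr G v p); GenTree.Leaf (rport G v p)]
                                     | p <- iota 0 (deg G v)])
  else GenTree.Node 0 [:: GenTree.Leaf (deg G v); GenTree.Leaf (pickle (a v))].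

Lemma view_eqS n (G1 G2 : pgraph n) a1 a2 t x1 x2 :
  view G1 a1 t.+1 x1 = view G2 a2 t.+1 x2 ->
  [/\ view G1 a1 t x1 = view G2 a2 t x2, deg G1 x1 = deg G2 x2 &
     forall p, p < deg G1 x1 -> view G1 a1 t (nbr G1 x1 p) = view G2 a2 t (nbr G2 x2 p)
                                 /\ rport G1 x1 p = rport G2 x2 p].
Proof.
move=> /= [E1 E2]; have Ed : deg G1 x1 = deg G2 x2.
  by have := congr1 size E2; rewrite !size_map !size_iota.
split=> // p lt.
have := congr1 (fun s => nth (GenTree.Leaf 0) s p) E2.
rewrite (nth_map 0) ?size_iota // (nth_map 0) ?size_iota -?Ed //.
rewrite !nth_iota -?Ed // !add0n.
by case=> -> ->.
Qed.

Lemma view_eq0 n (G1 G2 : pgraph n) a1 a2 t x1 x2 :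
  view G1 a1 t x1 = view G2 a2 t x2 -> deg G1 x1 = deg G2 x2 /\ a1 x1 = a2 x2.
Proof.
elim: t => [|t IH]; last by case/view_eqS=> /IH.
by case=> -> /(pcan_inj pickleK).
Qed.

Lemma view_le n (G1 G2 : pgraph n) a1 a2 s t x1 x2 : s <= t ->
  view G1 a1 t x1 = view G2 a2 t x2 -> view G1 a1 s x1 = view G2 a2 s x2.
Proof.
elim: t => [|t IH]; first by rewrite leqn0 => /eqP->.
rewrite leq_eqVlt ltnS => /orP[/eqP -> //|st] /view_eqS[H _ _]; exact: IH.
Qed.

Lemma view_iso n (G1 G2 : pgraph n) a1 a2 (phi : 'I_n -> 'I_n) :
  (forall u, deg G2 (phi u) = deg G1 u) -> (forall u, a2 (phi u) = a1 u) ->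
  (forall u p, p < deg G1 u -> nbr G2 (phi u) p = phi (nbr G1 u p) /\ rport G2 (phi u) p = rport G1 u p) ->
  forall t u, view G2 a2 t (phi u) = view G1 a1 t u.
Proof.
move=> Hd Ha Hn; elim=> [|t IH] u /=; first by rewrite Hd Ha.
rewrite IH Hd; congr (GenTree.Node _ (_ :: _)).
apply/eq_in_map => p.
rewrite mem_iota add0n => /andP[_ lt]; have [-> ->] := Hn u p lt.
by rewrite IH.
Qed.

Lemma transport2 n (G1 G2 : pgraph n) a1 a2 t : forall s x1 x2 y1,
  view G1 a1 (s + t) x1 = view G2 a2 (s + t) x2 -> reach G1 t x1 y1 ->
  exists y2, view G1 a1 s y1 = view G2 a2 s y2.
Proof.
elim: t => [|t IH] s x1 x2 y1; first by rewrite addn0 => E /= <-; exists x2.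
rewrite addnS => /view_eqS[E Ed En] /=; case=> [H|[p lt H]]; first exact: IH E H.
have [E' _] := En p lt; exact: IH E' H.
Qed.

Lemma transport1 n (G : pgraph n) a t : wf_pgraph G -> forall s x1 x2 y1,
  view G a (s + t) x1 = view G a (s + t) x2 -> reach G t x1 y1 ->
  exists y2, [/\ view G a s y1 = view G a s y2, reach G t x2 y2 & (y1 = y2 -> x1 = x2)].
Proof.
move=> wf; elim: t => [|t IH] s x1 x2 y1.
  by rewrite addn0 => E /= <-; exists x2; split.
rewrite addnS => /view_eqS[E Ed En] /=; case=> [H|[p lt H]].
  by have [y2 [E1 R1 I1]] := IH _ _ _ _ E H; exists y2; split => //; left.
have [E' Er] := En p lt; have [y2 [E1 R1 I1]] := IH _ _ _ _ E' H.
exists y2; split => //; first by right; exists p; rewrite -?Ed.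
move=> /I1 Eq; have [_ _ B1 _ _] := wf x1 p lt.
have lt2 : p < deg G x2 by rewrite -Ed.
have [_ _ B2 _ _] := wf x2 p lt2.
by rewrite -B1 -B2 Eq Er.
Qed.

Definition Lb n := (trunc_log 2 n).+1.
Definition mm k := k.-1 %/ 3.
Definition Pb n k := Lb n %/ (mm k).+1 + 1.
Definition IDs n (x : 'I_n) : seq bool :=
  val (nth (nseq_tuple (Lb n) false) (enum {: (Lb n).-tuple bool}) x).
Definition piece n k (x : 'I_n) i := nth [::] (reshape (nseq (mm k).+1 (Pb n k)) (IDs x)) i.
Definition code n k (x : 'I_n) i := [:: i == 0; true; i %% 3 == 1; i %% 3 == 2] ++ piece k x i.

Lemma IDs_size n (x : 'I_n) : size (IDs x) = Lb n.
Proof. by rewrite /IDs size_tuple. Qed.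

Lemma n_lt_2L n : n < 2 ^ Lb n.
Proof. exact: trunc_log_ltn. Qed.

Lemma IDs_inj n : injective (@IDs n).
Proof.
move=> x y /val_inj /eqP; rewrite nth_uniq ?enum_uniq //.
- by move/eqP/val_inj.
- rewrite -cardE card_tuple card_bool; apply: ltn_trans (n_lt_2L n); exact: ltn_ord.
- rewrite -cardE card_tuple card_bool; apply: ltn_trans (n_lt_2L n); exact: ltn_ord.
Qed.

Lemma piece_size n k (x : 'I_n) i : size (piece k x i) <= Pb n k.
Proof.
rewrite /piece nth_reshape size_take nth_nseq.
case: (i < _); case: ifP => H //; lia.
Qed.

Lemma piece_inj n k (x y : 'I_n) :
  (forall i, i <= mm k -> piece k x i = piece k y i) -> x = y.
Proof.
move=> H; apply: IDs_inj.
have Hs (z : 'I_n) : size (IDs z) <= sumn (nseq (mm k).+1 (Pb n k)).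
  rewrite IDs_size sumn_nseq /Pb /Lb addn1; apply: ltnW; exact: ltn_ceil.
rewrite -(reshapeKr (Hs x)) -(reshapeKr (Hs y)); congr flatten.
apply: (@eq_from_nth _ [::]); first by rewrite !size_reshape.
by move=> i; rewrite size_reshape size_nseq ltnS => /H.
Qed.

Lemma code_inv n k (x y : 'I_n) i j : code k x i = code k y j ->
  [/\ (i == 0) = (j == 0), i %% 3 = j %% 3 & piece k x i = piece k y j].
Proof.
case=> E0 E1 E2 E3; split => //.
have := ltn_pmod i (isT : 0 < 3); have := ltn_pmod j (isT : 0 < 3).
move: E1 E2; case: (i %% 3) => [|[|[|a]]]; case: (j %% 3) => [|[|[|b]]] //.
Qed.

Lemma path_exists n D (G : pgraph n) m (c : 'I_n) :
  wf_pgraph G -> has_diameter G D -> m.-1 + m.-1 <= D.-1 ->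
  exists g : nat -> 'I_n, (forall j, j <= m -> exact G c (g j) j) /\
                          (forall j, j < m -> adj G (g j) (g j.+1)).
Proof.
move=> wf [Hall [u [v Huv]]] Hm.
have [w Hw] : exists w, ~ reach G m.-1 c w.
  case: (reachE G m.-1 c u) => _ Hu; case: (reachE G m.-1 c v) => _ Hv.
  case Eu: (reachb G m.-1 c u); last by exists u => /reachE; rewrite Eu.
  case Ev: (reachb G m.-1 c v); last by exists v => /reachE; rewrite Ev.
  exfalso; apply: Huv; apply: reach_mono Hm _.
  apply: reach_trans (reach_sym wf (Hu Eu)) (Hv Ev).
have exd : exists t, reachb G t c w by exists D; apply/reachE.
case: (ex_minnP exd) => d /reachE Hd Hmin.
have md : m <= d.
  case: (leqP m d) => // lt; exfalso; apply: Hw; apply: reach_mono Hd; lia.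
suff: forall j, j <= d -> exists g : nat -> 'I_n, [/\ (forall i, i <= j -> exact G c (g i) i),
         (forall i, i < j -> adj G (g i) (g i.+1)) & reach G (d - j) (g j) w].
  case/(_ m md)=> g [H1 H2 _]; exists g; split => j lj; [exact: H1 | exact: H2].
elim=> [|j IH] lj.
  exists (fun _ => c); split => //; last by rewrite subn0.
  by move=> i; rewrite leqn0 => /eqP ->; split.
have [g [H1 H2 H3]] := IH (ltnW lj).
move: H3; rewrite -(subnSK lj) /=; case=> [H|[p lt H]].
  have := reach_trans (proj1 (H1 j (leqnn j))) H => /reachE /Hmin; lia.
pose x := nbr G (g j) p.
have adjx : adj G (g j) x by exists p.
exists (fun i => if i == j.+1 then x else g i); split.
- move=> i; rewrite leq_eqVlt => /orP[/eqP ->|li]; rewrite ?eqxx.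
  + split; first exact: reach_step (proj1 (H1 j (leqnn j))) adjx.
    move=> i0 li0 R; have := reach_trans R H => /reachE /Hmin; lia.
  + have -> : (i == j.+1) = false by lia.
    exact: H1.
- move=> i li; have -> : (i == j.+1) = false by lia.
  case: (ltnP i j) => lij.
  + have -> : (i.+1 == j.+1) = false by lia.
    exact: H2.
  + have -> : i = j by lia.
    by rewrite eqxx.
- by rewrite eqxx.
Qed.

Lemma views_inj n k (G : pgraph n) (A : {set 'I_n}) (f : 'I_n -> nat -> 'I_n) (adv : 'I_n -> seq bool) :
 wf_pgraph G -> 3 * mm k <= k.-1 ->
 (forall a b, a \in A -> b \in A -> reach G (2 * mm k) a b -> a = b) ->
 (forall u, exists2 a, a \in A & reach G (2 * mm k) u a) ->
 (forall a j, j <= mm k -> exact G a (f a j) j) ->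
 (forall a j, j < mm k -> adj G (f a j) (f a j.+1)) ->
 (forall a i, a \in A -> i <= mm k -> adv (f a i) = code k a i) ->
 (forall u (c : 'I_n) j, adv u = code k c j -> exists a i, [/\ a \in A, i <= mm k, f a i = u & code k a i = code k c j]) ->
 injective (view G adv k.-1).
Proof.
set m := mm k => wf H3m Hsep Hcov Hex Hadj Hpath Hinv.
have f0 a : f a 0 = a by case: (Hex a 0 (leq0n _)).
have anchor : forall c c', c \in A -> view G adv m c = view G adv m c' -> c = c'.
  move=> c c' cA E.
  have [_ Ea] := view_eq0 E.
  have Ec' : adv c' = code k c 0 by rewrite -Ea -{1}(f0 c) Hpath.
  have [a [i1 [aA1 i1m Ei /code_inv[Hi10 _ _]]]] := Hinv _ _ _ Ec'.
  have i0 : i1 = 0 by apply/eqP; rewrite Hi10.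
  move: Ei; rewrite i0 f0 => Eac'; subst a.
  suff Hj : forall j, j <= m -> view G adv (m - j) (f c j) = view G adv (m - j) (f c' j).
    apply: (piece_inj (k := k)) => j jm.
    have [_ Ej] := view_eq0 (Hj j jm).
    by move: Ej; rewrite !Hpath // => /code_inv[_ _].
  elim=> [|j IH] jm; first by rewrite subn0 !f0.
  have := IH (ltnW jm); rewrite -(subnSK jm) => /view_eqS[_ Ed En].
  have [p lt Ep] := Hadj c j jm.
  have [Ev Er] := En p lt.
  set y := nbr G (f c' j) p in Ev.
  have lt' : p < deg G (f c' j) by rewrite -Ed.
  have [_ Ey] := view_eq0 Ev.
  rewrite Ep Hpath // in Ey.
  have [a [i [aA im Ei /code_inv[Hi0 Hi3 _]]]] := Hinv _ _ _ (esym Ey).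
  have adjy : adj G (f c' j) y by exists p.
  have Ry : reach G j.+1 c' y := reach_step (proj1 (Hex c' j (ltnW jm))) adjy.
  have Ra : reach G i y a by apply: reach_sym wf _; rewrite -Ei; exact: (proj1 (Hex a i im)).
  have ac : c' = a.
    apply: Hsep => //; apply: reach_mono (reach_trans Ry Ra); lia.
  subst a.
  have ij : i <= j.+1.
    case: (leqP i j.+1) => // lt2; exfalso; apply: (proj2 (Hex c' i im) _ lt2); by rewrite Ei.
  have ji : j <= i.+1.
    case: (leqP j i.+1) => // lt2; exfalso; apply: (proj2 (Hex c' j (ltnW jm)) _ lt2).
    apply: reach_step (proj1 (Hex c' i im)) _; rewrite Ei; exact: adj_sym adjy.
  have eij : i = j.+1 by move: Hi0 Hi3; lia.
  by rewrite eij in Ei; rewrite -Ep Ei.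
move=> u u' E.
have [c cA Ruc] := Hcov u.
have E' : view G adv ((k.-1 - 2 * m) + 2 * m) u = view G adv ((k.-1 - 2 * m) + 2 * m) u'.
  by rewrite subnK //; lia.
have [c' [Ec R' Imp]] := transport1 wf E' Ruc.
apply: Imp; apply: anchor => //; apply: view_le Ec; lia.
Qed.

Lemma good_exists n D k (G : pgraph n) : 0 < k -> k <= D -> wf_pgraph G -> has_diameter G D ->
  exists adv, advice_size adv <= 4 + Pb n k /\ injective (view G adv k.-1).
Proof.
move=> k0 kD wf diam.
set m := mm k.
have H3m : 3 * m <= k.-1 by rewrite /m /mm; lia.
have Hm : m.-1 + m.-1 <= D.-1 by lia.
pose Hf c := constructive_indefinite_description _ (path_exists c wf diam Hm).
pose f c := sval (Hf c).
have Hex a j : j <= m -> exact G a (f a j) j by move=> jm; exact: (proj1 (svalP (Hf a))).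
have Hadj a j : j < m -> adj G (f a j) (f a j.+1) by move=> jm; exact: (proj2 (svalP (Hf a))).
pose P := fun B : {set 'I_n} => [forall a in B, forall b in B, (a != b) ==> ~~ reachb G (2 * m) a b].
have P0 : P set0 by apply/forall_inP => a; rewrite inE.
have [A /maxsetP [PA maxA] _] := maxset_exists P0.
have Hsep a b : a \in A -> b \in A -> reach G (2 * m) a b -> a = b.
  move=> aA bA /reachE R; move/forall_inP: PA => /(_ a aA) /forall_inP /(_ b bA).
  by case: eqP => // _; rewrite R.
have Hcov u : exists2 a, a \in A & reach G (2 * m) u a.
  case: (boolP [exists a in A, reachb G (2 * m) u a]).
    by case/exists_inP=> a aA /reachE R; exists a.
  move/exists_inPn => Hn; exfalso.
  have uA : u \notin A.
    apply/negP => uA; have R0 : reach G 0 u u by [].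
    by move: (Hn u uA) => /negP; apply; apply/reachE; apply: reach_mono (leq0n _) R0.
  have PB : P (u |: A).
    apply/forall_inP => a; rewrite in_setU1 => Ha; apply/forall_inP => b; rewrite in_setU1 => Hb.
    apply/implyP => ab; case/orP: Ha => [/eqP Ea|aA]; case/orP: Hb => [/eqP Eb|bA].
    - by rewrite Ea Eb eqxx in ab.
    - rewrite Ea; exact: Hn.
    - rewrite Eb; apply/negP => /reachE /(reach_sym wf) /reachE; apply/negP; exact: Hn.
    - by move/forall_inP: PA => /(_ a aA) /forall_inP /(_ b bA) /implyP; apply.
  have := maxA _ PB (subsetUr _ _) => E.
  by move: uA; rewrite -E in_setU1 eqxx.
have f0 a : f a 0 = a by case: (Hex a 0 (leq0n _)).
have Huniq a b i j : a \in A -> b \in A -> i <= m -> j <= m -> f a i = f b j -> a = b /\ i = j.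
  move=> aA bA im jm E.
  have ab : a = b.
    have R1 := proj1 (Hex a i im).
    have R2 : reach G j (f b j) b := reach_sym wf (proj1 (Hex b j jm)).
    rewrite -E in R2; have R3 := reach_trans R1 R2.
    apply: Hsep => //; apply: reach_mono R3; lia.
  subst b; split => //.
  case: (ltngtP i j) => // lij; exfalso.
  - by apply: (proj2 (Hex a j jm) i lij); rewrite -E; exact: (proj1 (Hex a i im)).
  - by apply: (proj2 (Hex a i im) j lij); rewrite E; exact: (proj1 (Hex a j jm)).
pose adv u := if [pick ai : 'I_n * 'I_m.+1 | (ai.1 \in A) && (f ai.1 ai.2 == u)] is Some ai
              then code k ai.1 ai.2 else nseq (4 + Pb n k) false.
exists adv; split.
  apply/bigmax_leqP => u _; rewrite /adv; case: pickP => [ai _|_].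
    by rewrite size_cat leq_add2l piece_size.
  by rewrite size_nseq.
apply: (views_inj (A := A) (f := f)) => //.
- move=> a i aA im; rewrite /adv; case: pickP => [[a' i'] /= /andP[a'A /eqP E]|].
    have [-> ->] := Huniq _ _ _ _ a'A aA (ltn_ord i') im E; done.
  by move/(_ (a, Ordinal (n := m.+1) (m := i) im)) => /=; rewrite aA eqxx.
- move=> u c j; rewrite /adv; case: pickP => [[a i] /= /andP[aA /eqP E] Ec|_ E].
    by exists a, i; split => //; rewrite -ltnS.
  by have := congr1 (nth false ^~ 1) E.
Qed.

Definition idv n k (G : pgraph n) a (u : 'I_n) : nat := pickle (view G a k.-1 u).
Definition labc n k (G : pgraph n) a (u : 'I_n) := #|[set w | idv k G a w < idv k G a u]|.
Definition row n k (G : pgraph n) a (w : 'I_n) :=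
  [seq (labc k G a (nbr G w p), rport G w p) | p <- iota 0 (deg G w)].
Definition Hc n k (G : pgraph n) a : out_graph :=
  mkseq (fun i => if [pick w | labc k G a w == i] is Some w then row k G a w else [::]) n.

Lemma idv_inj n k (G : pgraph n) a : injective (view G a k.-1) -> injective (idv k G a).
Proof. by move=> H u v /(pcan_inj pickleK) /H. Qed.

Lemma labc_lt n k (G : pgraph n) a u : labc k G a u < n.
Proof.
rewrite /labc; apply: (@leq_trans #|[set: 'I_n]|); last by rewrite cardsT card_ord.
apply: proper_card; apply/properP; split.
  by apply/subsetP => x; rewrite inE.
by exists u; rewrite ?inE ?ltnn.
Qed.

Lemma labc_inj n k (G : pgraph n) a : injective (view G a k.-1) -> injective (labc k G a).
Proof.
move=> /idv_inj Hi.
have key u w : idv k G a u < idv k G a w -> labc k G a u < labc k G a w.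
  move=> lt; apply: proper_card; apply/properP; split.
    apply/subsetP => x; rewrite !inE => lx; exact: ltn_trans lx lt.
  by exists u; rewrite !inE ?ltnn.
move=> u w E; case: (ltngtP (idv k G a u) (idv k G a w)) => [/key|/key|/Hi] //; by rewrite E ltnn.
Qed.

Lemma Hc_iso n k (G : pgraph n) a : injective (view G a k.-1) -> labeled_iso G (Hc k G a) (labc k G a).
Proof.
move=> Hi; split.
- by rewrite size_mkseq.
- exact: labc_inj.
- move=> v; exact: labc_lt.
- move=> v; rewrite /Hc nth_mkseq ?labc_lt //.
  case: pickP => [w /eqP /(labc_inj Hi) ->|/(_ v)]; last by rewrite eqxx.
  split; first by rewrite size_map size_iota.
  move=> p lt; rewrite (nth_map 0) ?size_iota // nth_iota // add0n //.
Qed.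

Lemma card_reindex n (phi : 'I_n -> 'I_n) (P : pred 'I_n) :
  injective phi -> #|[set w | P w]| = #|[set w | P (phi w)]|.
Proof.
move=> inj; rewrite -!sum1_card (reindex_inj inj) /=; apply: eq_bigl => w; by rewrite !inE.
Qed.

Lemma iso_out n D k (G1 G2 : pgraph n) a1 a2 v1 v2 : 0 < k ->
  (forall u, reach G1 D v1 u) ->
  injective (view G1 a1 k.-1) -> injective (view G2 a2 k.-1) ->
  view G1 a1 (D + k) v1 = view G2 a2 (D + k) v2 ->
  Hc k G1 a1 = Hc k G2 a2 /\ labc k G1 a1 v1 = labc k G2 a2 v2.
Proof.
case: k => // k' _; set k := k'.+1 => Hr I1 I2 E.
pose phi u := odflt v2 [pick w | view G2 a2 k w == view G1 a1 k u].
have Hphi u : view G2 a2 k (phi u) = view G1 a1 k u.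
  rewrite addnC in E; have [w Ew] := transport2 E (Hr u).
  rewrite /phi; case: pickP => [w' /eqP //|/(_ w)]; by rewrite Ew eqxx.
have Hdeg u : deg G2 (phi u) = deg G1 u by case: (view_eq0 (Hphi u)).
have Hadv u : a2 (phi u) = a1 u by case: (view_eq0 (Hphi u)).
have Hnb u p : p < deg G1 u -> nbr G2 (phi u) p = phi (nbr G1 u p) /\ rport G2 (phi u) p = rport G1 u p.
  move=> lt; have [_ Ed En] := view_eqS (Hphi u).
  have lt2 : p < deg G2 (phi u) by rewrite Ed.
  have [Ev Er] := En p lt2; split => //.
  apply: I2; rewrite /= Ev; symmetry.
  exact: (view_le (leqnSn k') (Hphi (nbr G1 u p))).
have Hv := view_iso Hdeg Hadv Hnb.
have Hid u : idv k G2 a2 (phi u) = idv k G1 a1 u by rewrite /idv Hv.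
have phi_inj : injective phi.
  move=> u w Euw; apply: I1; by rewrite -!Hv Euw.
have Hl u : labc k G2 a2 (phi u) = labc k G1 a1 u.
  rewrite /labc (card_reindex _ phi_inj); apply: eq_card => w; by rewrite !inE !Hid.
have phiv : phi v1 = v2.
  apply: I2; rewrite (Hv k' v1); apply: view_le E; lia.
split; last by rewrite -phiv Hl.
have [psi K1 K2] := injF_bij phi_inj.
apply: eq_mkseq => i.
case: pickP => [w1 /eqP E1|N1]; case: pickP => [w2 /eqP E2|N2].
- have ew : w2 = phi w1 by apply: (labc_inj I2); rewrite E2 Hl.
  subst w2; rewrite /row Hdeg; apply/eq_in_map => p; rewrite mem_iota add0n => /andP[_ lt].
  by have [-> ->] := Hnb w1 p lt; rewrite Hl.
- by have := N2 (phi w1); rewrite Hl E1 eqxx.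
- by have := N1 (psi w2); rewrite -Hl K2 E2 eqxx.
- by [].
Qed.

Lemma INR_exp2 l : INR (2 ^ l)%N = pow (INR 2) l.
Proof.
elim: l => [|l IH]; first by rewrite expn0.
by rewrite expnS mult_INR IH /=.
Qed.

Lemma log2_ge n : (2 <= n)%N -> Rle (INR (trunc_log 2 n)) (log2 (INR n)).
Proof.
move=> n2; set l := trunc_log 2 n.
have Hp : (2 ^ l <= n)%N by apply: trunc_logP; lia.
have e2 : INR 2 = IZR 2 by simpl; lra.
have l2 : Rlt 0 (ln (INR 2)) by rewrite e2; have := ln_lt_2; lra.
have Hle : Rle (ln (pow (INR 2) l)) (ln (INR n)).
  have H0 : Rlt 0 (pow (INR 2) l) by apply: pow_lt; simpl; lra.
  have H1 : Rle (pow (INR 2) l) (INR n) by rewrite -INR_exp2; apply: le_INR; apply/leP.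
  case: (Rle_lt_or_eq_dec _ _ H1) => [lt|->]; last by lra.
  by apply: Rlt_le; apply: ln_increasing.
rewrite ln_pow in Hle; last by simpl; lra.
rewrite /log2; apply: (Rmult_le_reg_r (ln (INR 2))) => //.
rewrite /Rdiv Rmult_assoc Rinv_l; last by lra.
lra.
Qed.

Lemma size_bound n k s : (0 < k)%N -> (s <= 4 + Pb n k)%N -> (2 <= n)%N ->
  Rle (INR s) (Rmult 8 (Rplus (INR 1) (Rdiv (log2 (INR n)) (INR k)))).
Proof.
move=> k0 hs n2; set l := trunc_log 2 n.
have Hl := log2_ge n2.
have Hnat : (s * k <= 8 * (k + l))%N.
  have H1 : ((Lb n %/ (mm k).+1) * (mm k).+1 <= Lb n)%N by apply: leq_divM.
  have H2 : (k <= 3 * (mm k).+1)%N by rewrite /mm; lia.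
  rewrite /Pb /Lb -/l in hs H1.
  set q := (l.+1 %/ (mm k).+1)%N in hs H1.
  nia.
have kR : Rlt 0 (INR k) by apply: lt_0_INR; apply/ltP.
have HR : Rle (Rmult (INR s) (INR k)) (Rmult (INR 8) (Rplus (INR k) (INR l))).
  rewrite -mult_INR -plus_INR -mult_INR; apply: le_INR; apply/leP; exact: Hnat.
apply: (Rmult_le_reg_r (INR k)) => //.
have -> : Rmult (Rmult 8 (Rplus (INR 1) (Rdiv (log2 (INR n)) (INR k)))) (INR k)
          = Rmult 8 (Rplus (INR k) (log2 (INR n))).
  by simpl; field; lra.
have e8 : INR 8 = IZR 8 by simpl; lra.
rewrite e8 in HR; rewrite -/l in Hl; lra.
Qed.

Definition scheme n k (G : pgraph n) : 'I_n -> seq bool :=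
  epsilon (inhabits (fun _ : 'I_n => [::]))
    (fun adv => (advice_size adv <= 4 + Pb n k)%N /\ injective (view G adv k.-1)).

Lemma scheme_good n D k (G : pgraph n) : (0 < k)%N -> (k <= D)%N -> wf_pgraph G -> has_diameter G D ->
  (advice_size (scheme k G) <= 4 + Pb n k)%N /\ injective (view G (scheme k G) k.-1).
Proof.
move=> k0 kD wf diam; have [adv Ha] := good_exists k0 kD wf diam.
rewrite /scheme; apply: (epsilon_spec (inhabits (fun _ : 'I_n => [::])) (fun adv => (advice_size adv <= 4 + Pb n k)%N /\ injective (view G adv k.-1))); by exists adv.
Qed.

Definition pk n := {G : pgraph n & 'I_n}.

Definition decP n D k (V : vtree) (x : pk n) : Prop :=
  (wf_pgraph (projT1 x) /\ has_diameter (projT1 x) D) /\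
  view (projT1 x) (scheme k (projT1 x)) (D + k) (projT2 x) = V.

Definition decode n D k (x0 : 'I_n) (V : vtree) : out_graph * nat :=
  let x := epsilon (inhabits (existT (fun _ => 'I_n) (PGraph (fun _ => 0) (fun _ _ => x0) (fun _ _ => 0)) x0))
             (decP D k V) in
  (Hc k (projT1 x) (scheme k (projT1 x)), labc k (projT1 x) (scheme k (projT1 x)) (projT2 x)).

Definition algo n D k (x0 : 'I_n) : algorithm (nat * vtree) (vtree * nat) :=
  Algo (fun d a => (0, GenTree.Node 0 [:: GenTree.Leaf d; GenTree.Leaf (pickle a)]))
       (fun s p => (s.2, p))
       (fun s ms => (s.1.+1, GenTree.Node 1 (s.2 :: [seq GenTree.Node 2 [:: m.1; GenTree.Leaf m.2] | m <- ms])))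
       (fun s => if s.1 == D + k then Some (decode D k x0 s.2) else None).

Lemma run_eq n D k (x0 : 'I_n) (G : pgraph n) adv t v :
  run (algo D k x0) G adv t v = (t, view G adv t v).
Proof.
elim: t v => [|t IH] v //=.
rewrite IH /= -map_comp; congr (_, GenTree.Node _ (_ :: _)).
by apply/eq_map => p /=; rewrite IH.
Qed.

Lemma decode_eq n D k (x0 : 'I_n) (G : pgraph n) v : (0 < k)%N -> (k <= D)%N -> wf_pgraph G -> has_diameter G D ->
  decode D k x0 (view G (scheme k G) (D + k) v) = (Hc k G (scheme k G), labc k G (scheme k G) v).
Proof.
move=> k0 kD wf diam.
rewrite /decode.
set x := epsilon _ _.
have : decP D k (view G (scheme k G) (D + k) v) x.
  apply: epsilon_spec; exists (existT (fun _ => 'I_n) G v); split => //.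
case: x => G' v' /= [[wf' diam'] E].
have [_ I1] := scheme_good k0 kD wf diam.
have [_ I2] := scheme_good k0 kD wf' diam'.
have [E1 E2] := iso_out k0 (proj1 diam v) I1 I2 (esym E).
by rewrite E1 E2.
Qed.

Theorem theorem4p1 :
  exists C : R, Rlt (INR 0) C /\
  forall n D k : nat, (2 <= n)%N -> (1 <= D)%N -> (0 < k)%N -> (k <= D)%N ->
    exists (S M : Type) (A : algorithm S M),
      forall G : pgraph n, wf_pgraph G -> has_diameter G D ->
        exists adv : 'I_n -> seq bool,
          Rle (INR (advice_size adv))
              (Rmult C (Rplus (INR 1) (Rdiv (log2 (INR n)) (INR k)))) /\
          solves_LTR_within A G adv (D + k).
Proof.
exists (IZR 8%Z); split; first by simpl; lra.
move=> n D k hn hD hk hkD.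
have x0 : 'I_n := Ordinal (ltnW hn).
exists (nat * vtree)%type, (vtree * nat)%type, (algo D k x0).
move=> G wf diam; exists (scheme k G).
have [Hs Hi] := scheme_good hk hkD wf diam.
split; first exact: size_bound.
exists (Hc k G (scheme k G)), (labc k G (scheme k G)); split; last exact: Hc_iso.
move=> v; exists (D + k) => //; split.
  by rewrite run_eq /= eqxx decode_eq.
move=> t' lt; rewrite run_eq /=.
by have -> : (t' == D + k) = false by apply/negbTE; rewrite neq_ltn lt.
Qed.
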